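(* Let $d\ge2$, $\alpha\in\mathbb{R}$, and $f=x^{d-1}(\alpha x+dy)$, a real binary form of degree $d$. Then $f$ has real symmetric rank $d$, and its decompositions as a sum of $d$ real symmetric rank one terms are exactly (up to reordering) the expressions $$f=\sum_{i=1}^d\frac{(\lambda_ix+y)^d}{\prod_{j\ne i}(\lambda_i-\lambda_j)},$$ where $\lambda_1,\dots,\lambda_d\in\mathbb{R}$ are distinct and $\alpha=\lambda_1+\cdots+\lambda_d$.
   Context: Binary forms of degree $d$ are identified with symmetric tensors in $(\mathbb{R}^2)^{\otimes d}$ via $\mathcal{T}\leftrightarrow\sum_k\mathcal{T}(k_1|\dots|k_d)x_{k_1}\cdots x_{k_d}$ with $x_1=x$, $x_2=y$. A symmetric rank one term is $c\,\ell^d$ with $c\in\mathbb{R}$ and $\ell$ a real linear form; the symmetric rank is the minimal number of such terms summing to the form. *)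

(* Defs.v *)
From HB Require Import structures.
From mathcomp Require Import all_boot all_order all_algebra.
From mathcomp Require Import reals.
From mathcomp Require Import mpoly.
Set Implicit Arguments. Unset Strict Implicit. Unset Printing Implicit Defensive.
Import Order.TTheory GRing.Theory Num.Theory.
Local Open Scope ring_scope.

Notation bform R := {mpoly R[2]}.

Definition bx {R : realType} : bform R := 'X_(0 : 'I_2).
Definition by_ {R : realType} : bform R := 'X_(1 : 'I_2).

Definition linear_form {R : realType} (l : bform R) : Prop :=
  exists a b : R, l = a *: bx + b *: by_.

Definition sym_rank_one_term {R : realType} (d : nat) (p : bform R) : Prop :=
  exists (c : R) (l : bform R), linear_form l /\ p = c *: l ^+ d.

Definition sym_decomp {R : realType} (d : nat) (f : bform R) (s : seq (bform R)) : Prop :=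
  (forall p, p \in s -> sym_rank_one_term d p) /\ \sum_(p <- s) p = f.

Definition has_sym_rank {R : realType} (d : nat) (f : bform R) (r : nat) : Prop :=
  (exists s, size s = r /\ sym_decomp d f s) /\
  (forall s, sym_decomp d f s -> (r <= size s)%N).

Definition f_alpha {R : realType} (d : nat) (alpha : R) : bform R :=
  bx ^+ d.-1 * (alpha *: bx + d%:R *: by_).

Definition lam_term {R : realType} (d : nat) (lam : 'I_d -> R) (i : 'I_d) : bform R :=
  (\prod_(j < d | j != i) (lam i - lam j))^-1 *: (lam i *: bx + by_) ^+ d.
Arguments lam_term {R} d lam i.

(* Main.v *)
Require Import Defs.
From HB Require Import structures.
From mathcomp Require Import all_boot all_order all_algebra.
From mathcomp Require Import reals.
From mathcomp Require Import mpoly.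
From mathcomp Require Import ring.
Import Order.TTheory GRing.Theory Num.Theory.
Local Open Scope ring_scope.


Lemma size_index_enum_ord d : size (index_enum 'I_d) = d.
Proof. by rewrite -[RHS]card_ord cardT enumT /index_enum unlock. Qed.

Section PolyPart.
Variable F : fieldType.

Lemma prod_coef_sub (r : seq F) (c : F) :
  (\prod_(x <- c :: r) ('X - x%:P))`_(size r) = - \sum_(x <- c :: r) x.
Proof.
elim: r c => [|c' r IH] c.
  by rewrite !big_cons !big_nil mulr1 addr0 coefB coefX coefC /= sub0r.
rewrite big_cons mulrBl coefB coefXM /= IH coefCM.
have -> : (\prod_(x <- c' :: r) ('X - x%:P))`_(size r).+1 = 1.
  have := lead_coef_prod_XsubC (c' :: r) xpredT id.
  by rewrite lead_coefE size_prod_XsubC.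
by rewrite [in RHS]big_cons mulr1 opprD addrC.
Qed.

Lemma moment_lemma (T : Type) (r : seq T) (P : pred T) (w l : T -> F) (n : nat) :
  (forall e, (e <= n)%N -> \sum_(x <- r | P x) w x * l x ^+ e = (e == n)%:R) ->
  forall j (p : {poly F}), (j <= n)%N -> (size p <= (n - j).+1)%N ->
  \sum_(x <- r | P x) w x * l x ^+ j * p.[l x] = p`_(n - j).
Proof.
move=> hM j p hj hp.
under eq_bigr => x _ do rewrite (horner_coef_wide _ hp) mulr_sumr.
rewrite exchange_big /=.
under eq_bigr => m _.
  under eq_bigr => x _ do rewrite mulrCA -mulrA -exprD.
  rewrite -mulr_sumr hM; last by rewrite -leq_subRL // -ltnS.
  over.
rewrite big_ord_recr /= subnKC // eqxx mulr1 big1 ?add0r // => m _.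
rewrite eqn_leq [(n <= _)%N]leqNgt.
have : (j + m < n)%N by rewrite -ltn_subRL.
by move=> ->; rewrite andbF mulr0.
Qed.

Lemma no_small_annih (T : eqType) (r : seq T) (P : pred T) (w l : T -> F) (n : nat) :
  (forall e, (e <= n)%N -> \sum_(x <- r | P x) w x * l x ^+ e = (e == n)%:R) ->
  forall B : seq F, (size B <= n)%N -> (forall x, x \in r -> P x -> l x \in B) -> False.
Proof.
move=> hM B hB hin.
pose p := \prod_(x <- B) ('X - x%:P).
have := @moment_lemma T r P w l n hM (n - size B) p (leq_subr _ _).
rewrite size_prod_XsubC subKn // leqnn => /(_ isT).
rewrite big_seq_cond big1; last first.
  move=> x /andP[xr Px]; have := hin x xr Px.
  by rewrite -root_prod_XsubC -/p => /rootP ->; rewrite mulr0.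
have := lead_coef_prod_XsubC B xpredT id.
rewrite lead_coefE size_prod_XsubC /= -/p => ->.
by move/eqP; rewrite eq_sym oner_eq0.
Qed.


Lemma size_pk d (l : 'I_d -> F) (k : 'I_d) :
  size (\prod_(j | j != k) ('X - (l j)%:P)) = d.
Proof.
rewrite -big_filter size_prod_XsubC.
have -> : size [seq j <- index_enum 'I_d | j != k] = #|predC1 k|.
  by rewrite cardE /enum_mem -enumT enumT.
by rewrite cardC1 card_ord; case: d {l} k => [[]|].
Qed.

Lemma pk_eval d (l : 'I_d -> F) (k i : 'I_d) : i != k ->
  (\prod_(j | j != k) ('X - (l j)%:P)).[l i] = 0.
Proof.
move=> ik; rewrite horner_prod (bigD1 i) //= hornerXsubC subrr mul0r //.
Qed.

Lemma pk_evalk d (l : 'I_d -> F) (k : 'I_d) :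
  (\prod_(j | j != k) ('X - (l j)%:P)).[l k] = \prod_(j | j != k) (l k - l j).
Proof. by rewrite horner_prod; apply: eq_bigr => j _; rewrite hornerXsubC. Qed.

Lemma D_neq0 d (l : 'I_d -> F) (k : 'I_d) : injective l ->
  \prod_(j | j != k) (l k - l j) != 0.
Proof.
move=> li; apply/prodf_neq0 => j jk; rewrite subr_eq0.
by apply: contra jk => /eqP /li ->.
Qed.

Lemma lagrange_coef d (l : 'I_d -> F) : injective l -> forall q : {poly F}, (size q <= d)%N ->
  \sum_(k < d) q.[l k] / \prod_(j | j != k) (l k - l j) = q`_d.-1.
Proof.
move=> li q hq.
pose pk k := \prod_(j | j != k) ('X - (l j)%:P).
pose L := \sum_(k < d) (q.[l k] / \prod_(j | j != k) (l k - l j)) *: pk k.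
have hL : q = L.
  apply/eqP; rewrite -subr_eq0; apply/eqP.
  apply: (@roots_geq_poly_eq0 _ _ [seq l k | k <- enum 'I_d]).
  - apply/allP => x /mapP[i _ ->]; apply/rootP.
    rewrite hornerD hornerN /L horner_sum [X in _ - X](bigD1 i) //=.
    rewrite [X in _ - (_ + X)]big1 ?addr0.
      rewrite hornerZ /pk pk_evalk divfK ?subrr //; exact: D_neq0.
    by move=> k ki; rewrite hornerZ /pk pk_eval ?mulr0 // eq_sym.
  - by rewrite map_inj_uniq ?enum_uniq.
  - rewrite size_map size_enum_ord; apply: leq_trans (size_add _ _) _.
    rewrite geq_max hq size_polyN; apply: leq_trans (size_sum _ _ _) _.
    apply/bigmax_leqP => k _; apply: leq_trans (size_scale_leq _ _) _.
    by rewrite /pk size_pk.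
rewrite [in RHS]hL /L coef_sum; apply: eq_bigr => k _.
rewrite coefZ.
have := lead_coef_prod_XsubC (index_enum 'I_d) (fun j => j != k) l.
by rewrite lead_coefE size_pk => ->; rewrite mulr1.
Qed.


Lemma prod_coef_sub' (r : seq F) : r != [::] ->
  (\prod_(x <- r) ('X - x%:P))`_(size r).-1 = - \sum_(x <- r) x.
Proof. by case: r => // c r _; rewrite prod_coef_sub. Qed.

Lemma lam_moment_lt d (l : 'I_d -> F) : injective l -> forall e, (e < d)%N ->
  \sum_(k < d) (\prod_(j | j != k) (l k - l j))^-1 * l k ^+ e = (e == d.-1)%:R.
Proof.
move=> li e he.
have := @lagrange_coef d l li ('X^e); rewrite size_polyXn => /(_ he).
rewrite coefXn eq_sym => <-; apply: eq_bigr => k _.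
by rewrite hornerXn mulrC.
Qed.

Lemma lam_moment_d d (l : 'I_d -> F) : injective l -> (0 < d)%N ->
  \sum_(k < d) (\prod_(j | j != k) (l k - l j))^-1 * l k ^+ d = \sum_(k < d) l k.
Proof.
move=> li d0.
pose P := \prod_(k < d) ('X - (l k)%:P).
have sP : size P = d.+1.
  by rewrite /P -(big_map l xpredT (fun x => 'X - x%:P)) size_prod_XsubC size_map size_index_enum_ord.
have lP : P`_d = 1.
  by have := lead_coef_prod_XsubC (index_enum 'I_d) xpredT l; rewrite lead_coefE sP.
have hq : (size ('X^d - P)%R <= d)%N.
  apply/leq_sizeP => j hj; rewrite coefB coefXn.
  case: (ltngtP j d) => [|hjd|->]; first by rewrite ltnNge hj.
    by rewrite nth_default ?sP // subr0.
  by rewrite lP subrr.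
have := @lagrange_coef d l li _ hq.
rewrite coefB coefXn (_ : (d.-1 == d) = false); last by rewrite ltn_eqF // ltn_predL.
have -> : P`_d.-1 = - \sum_(k < d) l k.
  rewrite /P -(big_map l xpredT (fun x => 'X - x%:P)).
  have -> : d.-1 = (size [seq l i | i <- index_enum 'I_d]).-1.
    by rewrite size_map size_index_enum_ord.
  rewrite prod_coef_sub' ?big_map //.
  by rewrite -size_eq0 size_map size_index_enum_ord -lt0n.
rewrite sub0r opprK => <-; apply: eq_bigr => k _.
by rewrite hornerD hornerN hornerXn /P horner_prod [X in _ - X](bigD1 k) //= hornerXsubC subrr mul0r subr0 mulrC.
Qed.

End PolyPart.


Definition i0 : 'I_2 := ord0.
Definition i1 : 'I_2 := ord_max.
Definition mono (d k : nat) : 'X_{1..2} := (U_(i0) *+ (d - k) + U_(i1) *+ k)%MM.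

Lemma mono1 d k : (mono d k) i1 = k.
Proof. by rewrite /mono mnmDE !mulmnE !mnm1E /= mul1n. Qed.

Lemma mono_eq d k k' : (mono d k == mono d k') = (k == k').
Proof.
apply/eqP/eqP => [h|->] //; by rewrite -(mono1 d k) h mono1.
Qed.

Section MP.
Variable R : realType.

Lemma expand d (a b : R) : (a *: bx + b *: by_) ^+ d =
  \sum_(k < d.+1) ('C(d,k)%:R * a^+(d-k) * b^+k) *: ('X_[mono d k] : bform R).
Proof.
rewrite exprDn; apply: eq_bigr => k _.
rewrite !exprZn /bx /by_ !mpolyXn -scalerAl -scalerAr scalerA -mpolyXD.
by rewrite -scaler_nat scalerA mulrA.
Qed.

Lemma coef_term d (a b : R) (k : 'I_d.+1) :
  ((a *: bx + b *: by_) ^+ d)@_(mono d k) = 'C(d,k)%:R * a^+(d-k) * b^+k.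
Proof.
rewrite expand raddf_sum (bigD1 k) //= big1 ?addr0.
  by rewrite mcoeffZ mcoeffX eqxx mulr1.
by move=> j jk; rewrite mcoeffZ mcoeffX mono_eq val_eqE (negbTE jk) mulr0.
Qed.

Lemma f_alpha_expand d (al : R) : (0 < d)%N ->
  f_alpha d al = al *: ('X_[mono d 0] : bform R) + d%:R *: 'X_[mono d 1].
Proof.
move=> d0; rewrite /f_alpha mulrDr -scalerAr -scalerAr /bx /by_ mpolyXn -!mpolyXD.
congr (_ *: 'X_[_] + _ *: 'X_[_]); apply/mnmP => i;
  rewrite /mono !mnmDE !mulmnE !mnm1E; case: i => [[|[|]]] //= _;
  rewrite ?muln0 ?muln1 ?addn0 ?subn0 ?subn1 ?addn1 ?mul1n ?prednK //.
Qed.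

End MP.

Section Main.
Variable R : realType.
Implicit Types (t : seq (R * R * R)).

Definition T d (x : R * R * R) : bform R := x.1.1 *: (x.1.2 *: bx + x.2 *: by_) ^+ d.

Lemma extract d (s : seq (bform R)) :
  (forall p, p \in s -> sym_rank_one_term d p) -> exists t, s = map (T d) t.
Proof.
elim: s => [|p s IH] h; first by exists [::].
have [t ->] : exists t, s = map (T d) t.
  by apply: IH => q qs; apply: h; rewrite inE qs orbT.
have [c [l [[a [b ->]] ->]]] := h p (mem_head _ _).
by exists ((c, a, b) :: t).
Qed.

Lemma mcoeff_sumT (I : Type) (r : seq I) (F : I -> bform R) m :
  (\sum_(x <- r) F x)@_m = \sum_(x <- r) (F x)@_m.
Proof.
elim: r => [|x r IH]; first by rewrite !big_nil mcoeff0.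
by rewrite !big_cons mcoeffD IH.
Qed.

Lemma coef_eqs d al t : (0 < d)%N -> f_alpha d al = \sum_(x <- t) T d x ->
  forall k : 'I_d.+1,
  \sum_(x <- t) x.1.1 * ('C(d,k)%:R * x.1.2^+(d-k) * x.2^+k) =
  (if k == 0%N :> nat then al else if k == 1%N :> nat then d%:R else 0).
Proof.
move=> d0 h k; have := congr1 (mcoeff (mono d k)) h.
rewrite mcoeff_sumT f_alpha_expand // mcoeffD !mcoeffZ !mcoeffX !mono_eq.
under eq_bigr => x _ do rewrite /T mcoeffZ coef_term.
move=> <-; case: k => [[|[|k]]] //= _.
- by rewrite mulr1 mulr0 addr0.
- by rewrite mulr1 mulr0 add0r.
- by rewrite !mulr0 addr0.
Qed.

Definition wt d (x : R * R * R) := x.1.1 * x.2 ^+ d.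
Definition lm (x : R * R * R) := x.1.2 / x.2.
Definition Pb (x : R * R * R) := x.2 != 0.

Lemma term_eq d e (x : R * R * R) (C : R) : (e <= d)%N -> Pb x ->
  x.1.1 * (C * x.1.2 ^+ e * x.2 ^+ (d - e)) = C * (wt d x * lm x ^+ e).
Proof.
move=> ed Px; rewrite /wt /lm expr_div_n -{2}(subnK ed) exprD.
have be : x.2 ^+ e != 0 by rewrite expf_neq0.
field.
exact: be.
Qed.

Lemma moments d al t : (0 < d)%N -> f_alpha d al = \sum_(x <- t) T d x ->
  forall e, (e <= d.-1)%N ->
  \sum_(x <- t | Pb x) wt d x * lm x ^+ e = (e == d.-1)%:R.
Proof.
move=> d0 h e he.
have ed : (e < d)%N by rewrite -(prednK d0) ltnS.
have hk : (d - e < d.+1)%N by rewrite ltnS leq_subr.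
have := @coef_eqs d al t d0 h (Ordinal hk); rewrite /=.
have k0 : (d - e == 0)%N = false by rewrite subn_eq0 leqNgt ed.
rewrite k0 (bigID Pb) /= [X in _ + X]big1 ?addr0; last first.
  by move=> x /negPn/eqP ->; rewrite expr0n k0 !mulr0.
rewrite subKn ?(ltnW ed) //.
under eq_bigr => x Px do rewrite (@term_eq d e x _ (ltnW ed) Px).
rewrite -mulr_sumr.
have dn0 : (d%:R : R) != 0 by rewrite pnatr_eq0 -lt0n.
case: (eqVneq e d.-1) => [He|ne].
  have -> : (d - e = 1)%N by rewrite He -subn1 subKn // subn_gt0 -(prednK d0).
  rewrite ?eqxx bin1 => /eqP.
  by rewrite -[X in _ == X]mulr1 (inj_eq (mulfI dn0)) => /eqP.
have -> : (d - e == 1)%N = false.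
  by apply/negP => /eqP h1; move/eqP: ne; apply; rewrite -(subKn (ltnW ed)) h1 subn1.
move/eqP; rewrite mulf_eq0 pnatr_eq0 -[('C(d, d - e) == 0%N)]negbK -lt0n bin_gt0 leq_subr /=.
by move/eqP.
Qed.

Lemma lower d (al : R) (s : seq (bform R)) : (0 < d)%N -> sym_decomp d (f_alpha d al) s -> (d <= size s)%N.
Proof.
move=> d0 [hs hsum]; have [t ht] := @extract d s hs; subst s.
rewrite big_map in hsum.
rewrite size_map leqNgt; apply/negP => lt.
apply: (@no_small_annih R _ t Pb (wt d) lm d.-1 (@moments d al t d0 (esym hsum))
   (map lm (filter Pb t))).
  rewrite size_map size_filter; apply: leq_trans (count_size _ _) _.
  by rewrite -ltnS prednK.
by move=> x xt Px; apply: map_f; rewrite mem_filter Px xt.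
Qed.

Lemma conv d (al : R) (lam : 'I_d -> R) : (0 < d)%N -> injective lam ->
  al = \sum_(i < d) lam i ->
  sym_decomp d (f_alpha d al) [seq lam_term d lam i | i : 'I_d].
Proof.
case: d lam => // n lam _ li hal; split.
  move=> p /imageP [i _ ->].
  exists (\prod_(j | j != i) (lam i - lam j))^-1, (lam i *: bx + by_).
  by split => //; exists (lam i), 1; rewrite scale1r.
rewrite big_image /= (eq_bigl (fun _ => true)) // f_alpha_expand //.
under eq_bigr => i _ do rewrite /lam_term -[by_]scale1r expand scaler_sumr.
rewrite exchange_big /=.
under eq_bigr => k _.
  under eq_bigr => i _ do rewrite scalerA expr1n mulr1 mulrCA.
  rewrite -scaler_suml -mulr_sumr.
  over.
rewrite /= big_ord_recl big_ord_recl /= [X in _ + (_ + X)]big1 ?addr0; last first.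
  move=> k _; rewrite /bump /= !add1n lam_moment_lt //; last first.
    by rewrite subSS ltnS leq_subr.
  rewrite (_ : (_ == _) = false) ?mulr0 ?scale0r //.
  apply/negbTE; rewrite subSS /= neq_ltn ltn_subrL /=.
  by case: k => k /= /(leq_trans _) ->.
rewrite /bump /= bin0 mul1r subn0 lam_moment_d // -hal addn0.
by rewrite bin1 subSS subn0 lam_moment_lt // eqxx mulr1.
Qed.

Lemma fwd d (al : R) (s : seq (bform R)) : (0 < d)%N -> size s = d ->
  sym_decomp d (f_alpha d al) s ->
  exists lam : 'I_d -> R, [/\ injective lam, al = \sum_(i < d) lam i &
     s = [seq lam_term d lam i | i : 'I_d]].
Proof.
move=> d0 hsz [hs hsum]; have [t ht] := @extract d s hs; subst s.
rewrite big_map in hsum; rewrite size_map in hsz.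
have hM := @moments d al t d0 (esym hsum).
have allPb : all Pb t.
  apply/negPn/negP; rewrite -has_predC has_count => hc.
  apply: (@no_small_annih R _ t Pb (wt d) lm d.-1 hM (map lm (filter Pb t))).
    rewrite size_map size_filter -ltnS prednK // -hsz -(count_predC Pb t).
    by rewrite -addn1 leq_add2l.
  by move=> x xt Px; apply: map_f; rewrite mem_filter Px xt.
have hM' : forall e, (e <= d.-1)%N -> \sum_(x <- t) wt d x * lm x ^+ e = (e == d.-1)%:R.
  by move=> e he; rewrite -(hM e he) -[RHS]big_filter (all_filterP allPb).
pose x0 := (0 : R, 0 : R, 0 : R).
pose lam (i : 'I_d) := lm (nth x0 t i); pose w (i : 'I_d) := wt d (nth x0 t i).
have toI : forall F : R * R * R -> R, \sum_(x <- t) F x = \sum_(i < d) F (nth x0 t i).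
  by move=> F; rewrite (big_nth x0) hsz big_mkord.
have hMI : forall e, (e <= d.-1)%N -> \sum_(i < d) w i * lam i ^+ e = (e == d.-1)%:R.
  by move=> e he; rewrite -(hM' e he) toI.
have li : injective lam.
  move=> i j hij; apply/eqP; apply/negPn/negP => ne.
  have := @no_small_annih R _ (index_enum 'I_d) xpredT w lam d.-1 hMI
     [seq lam k | k <- enum (predC1 j)]; apply.
    by rewrite size_map -cardE cardC1 card_ord.
  move=> k _ _; case: (eqVneq k j) => [->|kj].
    by rewrite -hij; apply: map_f; rewrite mem_enum inE ne.
  by apply: map_f; rewrite mem_enum inE kj.
have hw : forall i, w i = (\prod_(j | j != i) (lam i - lam j))^-1.
  move=> i0.
  have := @moment_lemma R _ (index_enum 'I_d) xpredT w lam d.-1 hMI 0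
     (\prod_(j | j != i0) ('X - (lam j)%:P)) (leq0n _).
  rewrite size_pk subn0 prednK // leqnn => /(_ isT).
  set q := \prod_(j | j != i0) ('X - (lam j)%:P).
  rewrite (bigD1 i0) //= big1 ?addr0; last first.
    by move=> k ki; rewrite /q pk_eval ?mulr0.
  rewrite /q pk_evalk expr0 mulr1.
  have := lead_coef_prod_XsubC (index_enum 'I_d) (fun j => j != i0) lam.
  rewrite lead_coefE size_pk => -> h.
  have Dn := @D_neq0 R d lam i0 li.
  by apply: (mulIf Dn); rewrite h mulVf.
exists lam; split => //.
  have := @coef_eqs d al t d0 (esym hsum) ord0; rewrite /= => <-.
  rewrite -(@lam_moment_d R d lam li d0).
  under [RHS]eq_bigr => i _ do rewrite -hw.
  rewrite /w /lam -(toI (fun x => wt d x * lm x ^+ d)); apply: eq_big_seq => x xt.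
  have Px : Pb x := allP allPb x xt.
  rewrite /wt /lm bin0 subn0 expr0 mulr1 mul1r expr_div_n; field.
  by rewrite expf_neq0.
rewrite -[t in LHS](mkseq_nth x0) hsz /mkseq -val_enum_ord -!map_comp /image_mem enumT.
apply: eq_map => i /=.
have Px : Pb (nth x0 t i) by apply: (allP allPb); rewrite mem_nth // hsz.
rewrite /lam_term -hw /w /lam /T /wt /lm.
move: Px; rewrite /Pb; case: (nth x0 t i) => [[c a] b] /= bn0.
rewrite -(scalerA c (b ^+ d)) -exprZn scalerDr scalerA [b * _]mulrC divfK //.
Qed.

End Main.

Theorem lemma3p18 (R : realType) (d : nat) (alpha : R) :
  (2 <= d)%N ->
  has_sym_rank d (f_alpha d alpha) d /\
  (forall s : seq (bform R), size s = d ->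
     (sym_decomp d (f_alpha d alpha) s <->
      exists lam : 'I_d -> R,
        [/\ injective lam, alpha = \sum_(i < d) lam i &
            perm_eq s [seq lam_term d lam i | i : 'I_d]])).
Proof.
move=> d2; have d0 : (0 < d)%N by apply: leq_trans d2.
pose beta := (alpha - \sum_(i < d) (i : nat)%:R) / d%:R.
pose lam0 (i : 'I_d) : R := (i : nat)%:R + beta.
have li0 : injective lam0.
  by move=> i j /addIr /eqP; rewrite eqr_nat => /eqP /val_inj.
have hal0 : alpha = \sum_(i < d) lam0 i.
  rewrite big_split /= sumr_const card_ord /beta -[_ *+ d]mulr_natr divfK.
    by rewrite addrC subrK.
  by rewrite pnatr_eq0 -lt0n.
split.
  split.
    exists [seq lam_term d lam0 i | i : 'I_d]; split.
      by rewrite size_image card_ord.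
    exact: (@conv R d alpha lam0 d0 li0 hal0).
  by move=> s hs; exact: (@lower R d alpha s d0 hs).
move=> s hsz; split.
  move=> hs; have [lam [li hal ->]] := @fwd R d alpha s d0 hsz hs.
  by exists lam; split.
move=> [lam [li hal hp]].
have [hm hsum] := @conv R d alpha lam d0 li hal.
split.
  by move=> p ps; apply: hm; rewrite -(perm_mem hp).
by rewrite (perm_big _ hp).
Qed.
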